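(* Let $D\ge1$, let $Q_D$ be the $D$-dimensional hypercube on $X=\{0,1\}^D$ with adjacency matrix $A$. For $1\le i<j\le D$ put $B_{ij}=\alpha^*_iA\alpha^*_j-\alpha^*_jA\alpha^*_i$. Then for every $S\subseteq\{1,\ldots,D\}$, $$B_{ij}w_S=\begin{cases}-4\,w_{(S\cup\{j\})\setminus\{i\}} & \text{if } i\in S,\ j\notin S,\\ 4\,w_{(S\cup\{i\})\setminus\{j\}} & \text{if } i\notin S,\ j\in S,\\ 0&\text{otherwise.}\end{cases}$$
   Context: $Q_D$ is the graph with vertex set $X=\{0,1\}^D$ (sequences $x=(x_1,\ldots,x_D)$), two vertices adjacent iff they differ in exactly one coordinate. Matrices are real with rows and columns indexed by $X$ and act on $V=\mathbb{R}^X$. For $1\le i\le D$, $\alpha^*_i$ is the diagonal matrix with $(x,x)$-entry $1$ if $x_i=0$ and $-1$ if $x_i=1$. For $S\subseteq\{1,\ldots,D\}$, $w_S\in V$ is the vector with $x$-entry $2^{-D/2}\prod_{k\in S}(-1)^{x_k}$ (equivalently $w_S=w_1\otimes\cdots\otimes w_D$ with $w_k=u=\tfrac1{\sqrt2}(1,1)^t$ if $k\notin S$ and $w_k=v=\tfrac1{\sqrt2}(1,-1)^t$ if $k\in S$, under the identification $\mathbb{R}^X=(\mathbb{R}^{\{0,1\}})^{\otimes D}$). *)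

(* Defs.v *)
From mathcomp Require Import all_boot all_order all_algebra.
Set Implicit Arguments. Unset Strict Implicit. Unset Printing Implicit Defensive.
Import Order.TTheory GRing.Theory Num.Theory.
Local Open Scope ring_scope.

(* Coordinates 1..D of the paper are represented by 'I_D (0-based). *)
(* Vertex set X = {0,1}^D, with x_k = 1 encoded as true. *)
Notation cube D := {ffun 'I_D -> bool}.

Definition cmat (R : rcfType) (D : nat) := cube D -> cube D -> R.
Definition cvec (R : rcfType) (D : nat) := {ffun cube D -> R}.

Definition mxv (R : rcfType) D (M : cmat R D) (v : cvec R D) : cvec R D :=
  [ffun x : cube D => \sum_(y : cube D) M x y * v y].
Definition mxm (R : rcfType) D (M N : cmat R D) : cmat R D :=
  fun x z => \sum_(y : cube D) M x y * N y z.
Definition msub (R : rcfType) D (M N : cmat R D) : cmat R D :=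
  fun x z => M x z - N x z.

Definition hdist D (x y : cube D) : nat := #|[set k : 'I_D | x k != y k]|.

Definition adjQ (R : rcfType) D : cmat R D :=
  fun x y => if hdist x y == 1%N then 1 else 0.

Definition alphaS (R : rcfType) D (i : 'I_D) : cmat R D :=
  fun x y => if x == y then (if x i then -1 else 1) else 0.

Definition wS (R : rcfType) D (S : {set 'I_D}) : cvec R D :=
  [ffun x : cube D => Num.sqrt ((2%:R ^+ D)^-1) * \prod_(k in S) (if x k then -1 else 1)].

Definition scalev (R : rcfType) D (c : R) (v : cvec R D) : cvec R D :=
  [ffun x : cube D => c * v x].

Definition Bij (R : rcfType) D (i j : 'I_D) : cmat R D :=
  msub (mxm (alphaS R i) (mxm (@adjQ R D) (alphaS R j)))
       (mxm (alphaS R j) (mxm (@adjQ R D) (alphaS R i))).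

(* Main.v *)
Require Import Defs.
From mathcomp Require Import all_boot all_order all_algebra.
From mathcomp Require Import ring.
Import GRing.Theory Num.Theory.
Local Open Scope ring_scope.

Section H.
Variable R : rcfType.
Variable D : nat.

Definition sg (b : bool) : R := if b then -1 else 1.
Definition chi (S : {set 'I_D}) (x : cube D) : R := \prod_(k in S) sg (x k).
Definition flip (x : cube D) (k : 'I_D) : cube D :=
  [ffun m => if m == k then ~~ x m else x m].

Lemma mxm_alphaL i (M : cmat R D) x y : mxm (alphaS R i) M x y = sg (x i) * M x y.
Proof.
rewrite /mxm (bigD1 x) //= big1 => [|z /negbTE zx]; rewrite /alphaS.
  by rewrite eqxx addr0.
by rewrite eq_sym zx mul0r.
Qed.

Lemma mxm_alphaR j (M : cmat R D) x y : mxm M (alphaS R j) x y = M x y * sg (y j).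
Proof.
rewrite /mxm (bigD1 y) //= big1 => [|z /negbTE zy]; rewrite /alphaS.
  by rewrite eqxx addr0.
by rewrite zy mulr0.
Qed.

Lemma hdist1 x y : (hdist x y == 1%N) = (y \in [set flip x k | k : 'I_D]).
Proof.
apply/idP/idP.
  move/cards1P => [k Hk]; apply/imsetP; exists k => //.
  apply/ffunP => m; rewrite ffunE.
  move/setP: Hk => /(_ m); rewrite !inE /=.
  by case: (m == k); case: (x m); case: (y m).
case/imsetP => k _ ->; apply/cards1P; exists k; apply/setP => m.
rewrite !inE ffunE; case: (m == k) => //=; by case: (x m).
Qed.

Lemma adj_sum (f : cube D -> R) x :
  \sum_y adjQ R x y * f y = \sum_k f (flip x k).
Proof.
transitivity (\sum_(y in [set flip x k | k : 'I_D]) f y).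
  rewrite (bigID (fun y => y \in [set flip x k | k : 'I_D])) /=.
  rewrite [X in _ + X]big1 ?addr0.
    by apply eq_bigr => y Hy; rewrite /adjQ hdist1 Hy mul1r.
  by move=> y Hy; rewrite /adjQ hdist1 (negbTE Hy) mul0r.
rewrite big_imset //= => k1 k2 _ _ /ffunP/(_ k1); rewrite !ffunE eqxx => h.
apply/eqP; apply/negPn/negP => ne; move: h; rewrite (negbTE ne).
by case: (x k1).
Qed.

Lemma chi_flip S x k : chi S (flip x k) = (if k \in S then -1 else 1) * chi S x.
Proof.
rewrite /chi; case: (boolP (k \in S)) => kS.
  rewrite !(big_setD1 k kS) /= ffunE eqxx.
  rewrite (eq_bigr (fun m => sg (x m))); last first.
    by move=> m; rewrite !inE ffunE => /andP[/negbTE -> _].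
  by rewrite /sg; case: (x k) => /=; ring.
rewrite mul1r; apply eq_bigr => m mS; rewrite ffunE; case: eqP => // mk.
by move: mS; rewrite mk (negbTE kS).
Qed.

Lemma sum_ij (i j : 'I_D) (e : 'I_D -> R) : i != j ->
  \sum_k (((if j == k then -1 else 1) - (if i == k then -1 else 1)) * e k)
  = 2 * e i - 2 * e j.
Proof.
move=> ij; rewrite (bigD1 i) // (bigD1 j) /=; last by rewrite eq_sym.
rewrite big1 => [|k /andP[ki kj]]; last first.
  by rewrite (eq_sym i k) (eq_sym j k) (negbTE ki) (negbTE kj) subrr mul0r.
rewrite eqxx (negbTE ij) eq_sym (negbTE ij) eqxx; ring.
Qed.

End H.

Theorem lemma9p6 (R : rcfType) (D : nat) (i j : 'I_D) (S : {set 'I_D}) :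
  (0 < D)%N -> (i < j)%N ->
  mxv (Bij R i j) (wS R S) =
    if (i \in S) && (j \notin S) then scalev (-4) (wS R (j |: S :\ i))
    else if (i \notin S) && (j \in S) then scalev 4 (wS R (i |: S :\ j))
    else [ffun _ => 0].
Proof.
move=> _ lij.
have ij : i != j by rewrite neq_ltn lij.
set c := Num.sqrt ((2%:R ^+ D)^-1) : R.
have wSE : forall (T : {set 'I_D}) (y : cube D), wS R T y = c * @chi R D T y by move=> T y; rewrite ffunE.
apply/ffunP => x; rewrite /mxv ffunE /Bij /msub.
transitivity (\sum_y adjQ R x y * ((sg R (x i) * sg R (y j) - sg R (x j) * sg R (y i)) * wS R S y)).
  by apply eq_bigr => y _; rewrite !mxm_alphaL !mxm_alphaR; ring.
rewrite adj_sum.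
transitivity (\sum_k (sg R (x i) * sg R (x j) * (c * @chi R D S x)) *
   (((if j == k then -1 else 1) - (if i == k then -1 else 1)) * (if k \in S then -1 else 1))).
  apply eq_bigr => k _; rewrite wSE chi_flip /sg !ffunE.
  have : ~~ ((j == k) && (i == k)).
    by apply/andP => [[/eqP jk /eqP ik]]; move: ij; rewrite ik jk eqxx.
  by case: (j == k); case: (i == k) => //= _; case: (k \in S); case: (x i); case: (x j) => /=; ring.
rewrite -big_distrr /= sum_ij //.
case Hi: (i \in S); case Hj: (j \in S) => /=; rewrite ?ffunE ?wSE.
- by rewrite /c; ring.
- have jS : j \notin S :\ i by rewrite !inE Hj andbF.
  rewrite /chi (big_setD1 i Hi) big_setU1 //= /sg.
  by rewrite /c; case: (x i); case: (x j); ring.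
- have iS : i \notin S :\ j by rewrite !inE Hi andbF.
  rewrite /chi (big_setD1 j Hj) big_setU1 //= /sg.
  by rewrite /c; case: (x i); case: (x j); ring.
- by rewrite /c; ring.
Qed.
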